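(* Let \(s\ge 0\) be an integer and let \(G\) be a graph with \(\mathrm{surplus}(G)\geq s\). Then deleting any subset of \(s\) vertices from \(G\) results in a graph \(G'\) such that \(LP(G')=LP(G)-\frac{s}{2}\).
   Context: All graphs are finite, undirected and simple. For \(X\subseteq V(G)\), \(N(X)\) is the set of vertices not in \(X\) adjacent to some vertex of \(X\). The surplus of an independent set \(X\) is \(\mathrm{surplus}(X)=|N(X)|-|X|\); the surplus \(\mathrm{surplus}(G)\) of a graph is the minimum surplus over all nonempty independent sets of \(G\). \(LP(G)\) is the optimum value of the linear program: minimize \(\sum_{v\in V(G)}x_v\) subject to \(x_u+x_v\ge 1\) for every edge \(\{u,v\}\in E(G)\) and \(0\le x_v\le 1\) for every \(v\in V(G)\). *)

(* Defs.v *)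
From mathcomp Require Import all_boot all_order all_algebra.
From mathcomp Require Import boolp classical_sets reals.
Set Implicit Arguments. Unset Strict Implicit. Unset Printing Implicit Defensive.
Import Order.TTheory GRing.Theory Num.Theory.

Definition simple_graph (T : finType) (e : rel T) : Prop :=
  symmetric e /\ irreflexive e.

Definition independent (T : finType) (e : rel T) (X : {set T}) : bool :=
  [forall x in X, forall y in X, ~~ e x y].

Definition nbhd (T : finType) (e : rel T) (X : {set T}) : {set T} :=
  [set v | (v \notin X) && [exists u in X, e u v]].

Definition surplus_ge (T : finType) (e : rel T) (s : nat) : Prop :=
  forall X : {set T}, X != finset.set0 -> independent e X -> (#|X| + s <= #|nbhd e X|)%N.

Local Open Scope ring_scope.
Local Open Scope classical_set_scope.

(* Feasible fractional vertex covers of the subgraph of (T,e) induced on V. *)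
Definition lp_feasible (R : realType) (T : finType) (e : rel T) (V : {set T})
  (x : T -> R) : Prop :=
  (forall u v, u \in V -> v \in V -> e u v -> 1 <= x u + x v) /\
  (forall v, v \in V -> 0 <= x v <= 1).

(* LP(G[V]) : optimum (= infimum, attained) of sum_{v in V} x_v over feasible x *)
Definition LP (R : realType) (T : finType) (e : rel T) (V : {set T}) : R :=
  inf [set (\sum_(v in V) x v) | x in [set x : T -> R | lp_feasible e V x]].

(* Main.v *)
Require Import Defs.
From mathcomp Require Import all_boot all_order all_algebra.
From mathcomp Require Import boolp classical_sets reals.
From mathcomp Require Import lra zify.
Set Implicit Arguments. Unset Strict Implicit. Unset Printing Implicit Defensive.
Import Order.TTheory GRing.Theory Num.Theory.
Local Open Scope ring_scope.

Lemma key (R : realType) (T : finType) (f : T -> R) (n : nat) (A : {set T}) :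
  (#|A| <= n)%N ->
  (forall t, 0 < t -> leq #|[set v in A | f v <= - t]| #|[set v in A | t <= f v]|) ->
  0 <= \sum_(v in A) f v.
Proof.
elim: n A => [|n IH] A hA hc.
  move: hA; rewrite leqn0 cards_eq0 => /eqP ->; by rewrite big_set0.
case: (boolP [exists v in A, f v < 0]); last first.
  move/existsPn => h; apply: sumr_ge0 => v vA.
  by move: (h v); rewrite vA /= -leNgt.
case/existsP => w0 /andP [w0A hw0].
pose w := [arg min_(i < w0 in A) f i]%O.
have [wA wmin] : w \in A /\ forall v, v \in A -> f w <= f v.
  rewrite /w; case: Order.TotalTheory.arg_minP => // i iA H; split => // v vA; exact: H.
have fw0 : f w < 0.
  exact: le_lt_trans (wmin _ w0A) hw0.
have hct0 : 0 < - f w by rewrite oppr_gt0.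
have hct := hc _ hct0.
have : (0 < #|[set v in A | (- f w <= f v)%R]|)%N.
  apply: leq_trans hct; apply/card_gt0P; exists w; by rewrite inE wA opprK lexx.
case/card_gt0P => u; rewrite inE => /andP [uA hu].
have uw : u != w.
  apply/eqP => E; move: hu; rewrite E; lra.
have hwu : 0 <= f w + f u by lra.
pose A' := A :\ w :\ u.
have hsA : #|A| = (#|A'|).+2.
  by rewrite (cardsD1 w A) wA (cardsD1 u (A :\ w)) !inE uw uA.
have IH' : 0 <= \sum_(v in A') f v.
  apply: IH; first by lia.
  move=> t t0.
  case: (leP t (- f w)) => htw; last first.
    rewrite (_ : [set v in A' | f v <= - t] = finset.set0) ?cards0 //.
    apply/setP => v; rewrite !inE; apply/negP => /andP [/andP [_ /andP [_ vA]] hv].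
    have := wmin v vA; lra.
  have E1 : [set v in A' | f v <= - t] = [set v in A | f v <= - t] :\ w.
    apply/setP => v; rewrite !inE.
    case: (eqVneq v u) => [->|vu] /=; last by rewrite andbA.
    rewrite uw uA /=; apply/esym/negP => h; lra.
  have E2 : [set v in A' | t <= f v] = [set v in A | t <= f v] :\ u.
    apply/setP => v; rewrite !inE.
    case: (eqVneq v w) => [->|vw] /=; last by rewrite andbA.
    have : ~~ (t <= f w) by rewrite -ltNge; lra.
    by move/negbTE ->; rewrite !andbF.
  have h1 := cardsD1 w [set v in A | f v <= - t].
  have h2 := cardsD1 u [set v in A | t <= f v].
  have q1 : f w <= - t by lra.
  have q2 : t <= f u by lra.
  rewrite !inE wA q1 /= in h1.
  rewrite !inE uA q2 /= in h2.
  have := hc t t0; rewrite E1 E2; lia.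
have uA2 : (u \in A) && (u != w) by rewrite uA uw.
rewrite (bigD1 w wA) (bigD1 u uA2) /=.
rewrite (eq_bigl (fun v => v \in A')); last first.
  move=> v; rewrite !inE. by case: (v != w); case: (v != u); rewrite ?andbT ?andbF.
lra.
Qed.

Lemma lower (R : realType) (T : finType) (e : rel T) (V : {set T}) (k : nat)
  (hs : surplus_ge e k) (hV : (#|~: V| <= k)%N) (x : T -> R)
  (hx : lp_feasible e V x) : #|V|%:R / 2 <= \sum_(v in V) x v.
Proof.
case: hx => hE hB.
have H : 0 <= \sum_(v in V) (x v - 1/2).
  apply: (@key _ _ _ #|V|) => // t t0.
  set X := [set v in V | x v - 1/2 <= - t].
  set Y := [set v in V | t <= x v - 1/2].
  case: (eqVneq X finset.set0) => [->|Xn0]; first by rewrite cards0.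
  have indX : independent e X.
    apply/forallP => a; apply/implyP => ha; apply/forallP => b; apply/implyP => hb.
    apply/negP => eab.
    move: ha hb; rewrite !inE => /andP [aV ha] /andP [bV hb].
    have := hE a b aV bV eab; lra.
  have hsX := hs X Xn0 indX.
  have sub : nbhd e X \subset Y :|: ~: V.
    apply/fintype.subsetP => v; rewrite !inE => /andP [vX /existsP [u /andP [uX euv]]].
    case: (boolP (v \in V)) => vV //=; rewrite orbF.
    move: uX; rewrite !inE => /andP [uV hu].
    have := hE u v uV vV euv; lra.
  have := subset_leq_card sub; rewrite cardsU; lia.
rewrite sumrB sumr_const -mulr_natr in H.
lra.
Qed.

Lemma LPval (R : realType) (T : finType) (e : rel T) (V : {set T}) (k : nat)
  (hs : surplus_ge e k) (hV : (#|~: V| <= k)%N) :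
  LP R e V = #|V|%:R / 2.
Proof.
rewrite /LP; set E := (X in inf X).
have mem : E (#|V|%:R / 2).
  exists (fun=> 1/2).
    split => [u v _ _ _|v _]; lra.
  by rewrite sumr_const -mulr_natr /=; lra.
have lb : lbound E (#|V|%:R / 2).
  move=> y [x hx <-]; exact: lower hs hV x hx.
apply/le_anti/andP; split.
  apply: ge_inf => //; by exists (#|V|%:R / 2).
by apply: lb_le_inf => //; exists (#|V|%:R / 2).
Qed.

Theorem lemma3 (R : realType) (T : finType) (e : rel T) (s : nat)
  (hG : simple_graph e) (hsur : surplus_ge e s)
  (S : {set T}) (hS : #|S| = s) :
  LP R e (~: S) = LP R e [set: T] - s%:R / 2.
Proof.
rewrite (@LPval R T e (~: S) s hsur); last by rewrite finset.setCK hS.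
rewrite (@LPval R T e [set: T] s hsur); last by rewrite finset.setCT cards0.
have := cardsC S; rewrite cardsT hS => <-.
rewrite natrD; lra.
Qed.
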